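(* If $\nu\in\left(-1,-\tfrac12\right]$ and $a,b\ge0$, then $$|\mathcal{I}_\nu(a)-\mathcal{I}_\nu(b)|\ge |a-b|\sqrt{\mathcal{I}_\nu'(a)\,\mathcal{I}_\nu'(b)}.$$ Moreover, this inequality holds for every $\nu>-1$ and all $a,b\in\left(0,\sqrt{2(\nu+3)}\right)$.
   Context: For $\nu>-1$ define $\mathcal{I}_\nu:\mathbb{R}\to[1,\infty)$ by $\mathcal{I}_\nu(x)=\sum_{n\ge0}\frac{(1/4)^n}{(\nu+1)_n\, n!}x^{2n}$, where $(a)_n=a(a+1)\cdots(a+n-1)$, $(a)_0=1$. Equivalently $\mathcal{I}_\nu(x)=2^\nu\Gamma(\nu+1)x^{-\nu}I_\nu(x)$ for $x>0$, where $I_\nu$ is the modified Bessel function of the first kind. *)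

(* Defs.v *)
From Stdlib Require Import Arith Reals Lra ClassicalEpsilon.
Open Scope R_scope.

Fixpoint poch (a : R) (n : nat) : R :=
  match n with
  | O => 1
  | S k => poch a k * (a + INR k)
  end.

(* n-th coefficient of the series of I_nu in powers of x^2. *)
Definition Icoef (nu : R) (n : nat) : R :=
  (/ 4) ^ n / (poch (nu + 1) n * INR (fact n)).

Definition Ipartial (nu x : R) (N : nat) : R :=
  sum_f_R0 (fun n => Icoef nu n * x ^ (2 * n)) N.

(* I_nu(x) := sum_{n>=0} (1/4)^n / ((nu+1)_n n!) x^(2n), defined as the limit of
   the partial sums (chosen by Hilbert's epsilon; the series converges for every
   real x whenever nu > -1). *)
Definition Inu (nu x : R) : R :=
  epsilon (inhabits 0) (fun l => Un_cv (Ipartial nu x) l).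

(* Main.v *)
Require Import Defs.
From Stdlib Require Import Reals.
Open Scope R_scope.
From Coquelicot Require Import Coquelicot.
From Stdlib Require Import Lra Psatz ClassicalEpsilon FunctionalExtensionality.
Lemma poch_pos nu n : -1 < nu -> 0 < poch (nu+1) n.
Proof.
  intros H; induction n as [|n IH]; simpl. lra.
  apply Rmult_lt_0_compat; auto. pose proof (pos_INR n); lra.
Qed.

Lemma Icoef_pos nu n : -1 < nu -> 0 < Icoef nu n.
Proof.
  intros H; unfold Icoef. apply Rdiv_lt_0_compat.
  apply pow_lt; lra. apply Rmult_lt_0_compat. now apply poch_pos.
  apply INR_fact_lt_0.
Qed.

Lemma Icoef_0 nu : Icoef nu 0 = 1.
Proof. unfold Icoef; simpl; field. Qed.

Lemma Icoef_S nu n : -1 < nu ->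
  Icoef nu (S n) = Icoef nu n / (4 * (INR n + 1) * (INR n + (nu+1))).
Proof.
  intros H. unfold Icoef. simpl poch. rewrite fact_simpl, mult_INR, S_INR.
  pose proof (poch_pos nu n H). pose proof (INR_fact_lt_0 n). pose proof (pos_INR n).
  simpl pow. field. repeat split; lra.
Qed.

Lemma Series_zero : Series (fun _ => 0) = 0.
Proof.
  rewrite (Series_ext (fun _ => 0) (fun n => 0 * (fun _ => 0) n)) by (intros; ring).
  rewrite Series_scal_l; ring.
Qed.

Lemma Icoef_radius nu : -1 < nu -> CV_radius (Icoef nu) = p_infty.
Proof.
  intros H. apply CV_radius_infinite_DAlembert.
  - intros n. pose proof (Icoef_pos nu n H); lra.
  - apply is_lim_seq_ext with (fun n => / (4 * (INR n + 1) * (INR n + (nu+1)))).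
    + intros n. rewrite Icoef_S by auto. pose proof (Icoef_pos nu n H).
      pose proof (pos_INR n).
      assert (E: Icoef nu n / (4 * (INR n + 1) * (INR n + (nu + 1))) / Icoef nu n
        = / (4 * (INR n + 1) * (INR n + (nu+1)))) by (field; repeat split; lra).
      rewrite E, Rabs_pos_eq; [reflexivity|].
      apply Rlt_le, Rinv_0_lt_compat. apply Rmult_lt_0_compat; try lra.
    + replace (Finite 0) with (Rbar_inv p_infty) by reflexivity.
      apply is_lim_seq_inv; [|discriminate].
      apply is_lim_seq_le_p_loc with INR; [|apply is_lim_seq_INR].
      exists 0%nat. intros n _. pose proof (pos_INR n). nra.
Qed.

Definition Inf (a : nat -> R) := CV_radius a = p_infty.

Lemma Inf_lt a x : Inf a -> Rbar_lt (Rabs x) (CV_radius a).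
Proof. intros H; rewrite H; exact I. Qed.

Lemma Inf_ex a x : Inf a -> ex_pseries a x.
Proof. intros H; apply CV_radius_inside, Inf_lt, H. Qed.

Lemma Inf_der a : Inf a -> Inf (PS_derive a).
Proof. unfold Inf; intros H; rewrite CV_radius_derive; exact H. Qed.

Lemma PS_ge0 a y : Inf a -> (forall n, 0 <= a n) -> 0 <= y -> 0 <= PSeries a y.
Proof.
  intros Ha Hp Hy. unfold PSeries. rewrite <- Series_zero.
  apply Series_le.
  - intros n; split; [lra|]. apply Rmult_le_pos; auto. apply pow_le; auto.
  - eapply ex_series_ext; [|apply (Inf_ex a y Ha)].
    intros n; simpl. rewrite pow_n_pow. apply Rmult_comm.
Qed.

Lemma PS_lower a y : Inf a -> (forall n, 0 <= a n) -> 0 <= y -> a 0%nat <= PSeries a y.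
Proof.
  intros Ha Hp Hy. rewrite PSeries_decr_1 by (apply Inf_ex; auto).
  assert (0 <= PSeries (PS_decr_1 a) y).
  { apply PS_ge0; auto. unfold Inf; rewrite CV_radius_decr_1; exact Ha.
    intros n; apply Hp. }
  nra.
Qed.

Lemma PS_deriv a y : Inf a -> is_derive (PSeries a) y (PSeries (PS_derive a) y).
Proof. intros H; apply is_derive_PSeries, Inf_lt, H. Qed.

Definition c1 nu := PS_derive (Icoef nu).
Definition c2 nu := PS_derive (c1 nu).
Definition c3 nu := PS_derive (c2 nu).
Definition F0 nu y := PSeries (Icoef nu) y.
Definition F1 nu y := PSeries (c1 nu) y.
Definition F2 nu y := PSeries (c2 nu) y.
Definition F3 nu y := PSeries (c3 nu) y.

Lemma Inf0 nu : -1 < nu -> Inf (Icoef nu).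
Proof. intros; apply Icoef_radius; auto. Qed.
Lemma Inf1 nu : -1 < nu -> Inf (c1 nu).
Proof. intros; apply Inf_der, Inf0; auto. Qed.
Lemma Inf2 nu : -1 < nu -> Inf (c2 nu).
Proof. intros; apply Inf_der, Inf1; auto. Qed.
Lemma Inf3 nu : -1 < nu -> Inf (c3 nu).
Proof. intros; apply Inf_der, Inf2; auto. Qed.

Lemma E1 nu y : -1 < nu -> F0 nu y / 4 = (nu+1) * F1 nu y + y * F2 nu y.
Proof.
  intros H. unfold F0, F1, F2.
  rewrite <- PSeries_incr_1, <- PSeries_scal.
  replace (PSeries (Icoef nu) y / 4) with (PSeries (PS_scal (/4) (Icoef nu)) y)
    by (rewrite PSeries_scal; unfold Rdiv; apply Rmult_comm).
  rewrite <- PSeries_plus.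
  2:{ apply CV_radius_inside. rewrite CV_radius_scal by lra. apply Inf_lt, Inf1; auto. }
  2:{ apply CV_radius_inside. rewrite CV_radius_incr_1. apply Inf_lt, Inf2; auto. }
  apply PSeries_ext. intros n.
  unfold PS_plus, PS_scal, PS_incr_1, c2, c1, PS_derive.
  destruct n as [|k].
  - change (/4 * Icoef nu 0 = (nu+1) * (INR 1 * Icoef nu 1) + 0).
    rewrite Icoef_S by auto. rewrite Icoef_0. simpl. field. lra.
  - change (/4 * Icoef nu (S k) = (nu+1) * (INR (S (S k)) * Icoef nu (S (S k)))
      + INR (S k) * (INR (S (S k)) * Icoef nu (S (S k)))).
    rewrite (Icoef_S nu (S k)) by auto. rewrite !S_INR.
    pose proof (pos_INR k).
    field. lra.
Qed.

Lemma E2 nu y : -1 < nu -> F1 nu y / 4 = (nu+2) * F2 nu y + y * F3 nu y.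
Proof.
  intros H. unfold F1, F2, F3.
  rewrite <- PSeries_incr_1, <- PSeries_scal.
  replace (PSeries (c1 nu) y / 4) with (PSeries (PS_scal (/4) (c1 nu)) y)
    by (rewrite PSeries_scal; unfold Rdiv; apply Rmult_comm).
  rewrite <- PSeries_plus.
  2:{ apply CV_radius_inside. rewrite CV_radius_scal by lra. apply Inf_lt, Inf2; auto. }
  2:{ apply CV_radius_inside. rewrite CV_radius_incr_1. apply Inf_lt, Inf3; auto. }
  apply PSeries_ext. intros n.
  unfold PS_plus, PS_scal, PS_incr_1, c3, c2, c1, PS_derive.
  destruct n as [|k].
  - change (/4 * (INR 1 * Icoef nu 1) = (nu+2) * (INR 1 * (INR 2 * Icoef nu 2)) + 0).
    rewrite (Icoef_S nu 1) by auto. simpl. field. lra.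
  - change (/4 * (INR (S (S k)) * Icoef nu (S (S k))) =
      (nu+2) * (INR (S (S k)) * (INR (S (S (S k))) * Icoef nu (S (S (S k)))))
      + INR (S k) * (INR (S (S k)) * (INR (S (S (S k))) * Icoef nu (S (S (S k)))))).
    rewrite (Icoef_S nu (S (S k))) by auto. rewrite !S_INR.
    pose proof (pos_INR k).
    field. lra.
Qed.

Lemma F1_pos nu y : -1 < nu -> 0 <= y -> 0 < F1 nu y.
Proof.
  intros H Hy. eapply Rlt_le_trans; [|apply (PS_lower (c1 nu) y (Inf1 nu H)); auto].
  - unfold c1, PS_derive. apply Rmult_lt_0_compat. apply lt_0_INR; lia. apply Icoef_pos; auto.
  - intros n. unfold c1, PS_derive. apply Rmult_le_pos. apply pos_INR. apply Rlt_le, Icoef_pos; auto.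
Qed.

Lemma F2_ge0 nu y : -1 < nu -> 0 <= y -> 0 <= F2 nu y.
Proof.
  intros H Hy. apply PS_ge0; auto. apply Inf2; auto.
  intros n. unfold c2, c1, PS_derive. apply Rmult_le_pos. apply pos_INR.
  apply Rmult_le_pos. apply pos_INR. apply Rlt_le, Icoef_pos; auto.
Qed.

Lemma F0_ge1 nu y : -1 < nu -> 0 <= y -> 1 <= F0 nu y.
Proof.
  intros H Hy. rewrite <- (Icoef_0 nu). apply (PS_lower _ y (Inf0 nu H)); auto.
  intros n; apply Rlt_le, Icoef_pos; auto.
Qed.

Lemma DF0 nu y : -1 < nu -> is_derive (fun x => F0 nu x) y (F1 nu y).
Proof. intros H; apply (PS_deriv (Icoef nu) y (Inf0 nu H)). Qed.
Lemma DF1 nu y : -1 < nu -> is_derive (fun x => F1 nu x) y (F2 nu y).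
Proof. intros H; apply (PS_deriv (c1 nu) y (Inf1 nu H)). Qed.
Lemma DF2 nu y : -1 < nu -> is_derive (fun x => F2 nu x) y (F3 nu y).
Proof. intros H; apply (PS_deriv (c2 nu) y (Inf2 nu H)). Qed.
Lemma DeF0 nu y : -1 < nu -> Derive (fun x => F0 nu x) y = F1 nu y.
Proof. intros; apply is_derive_unique, DF0; auto. Qed.
Lemma DeF1 nu y : -1 < nu -> Derive (fun x => F1 nu x) y = F2 nu y.
Proof. intros; apply is_derive_unique, DF1; auto. Qed.
Lemma DeF2 nu y : -1 < nu -> Derive (fun x => F2 nu x) y = F3 nu y.
Proof. intros; apply is_derive_unique, DF2; auto. Qed.
Lemma ExF0 nu y : -1 < nu -> ex_derive (fun x => F0 nu x) y.
Proof. intros; eexists; apply DF0; auto. Qed.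
Lemma ExF1 nu y : -1 < nu -> ex_derive (fun x => F1 nu x) y.
Proof. intros; eexists; apply DF1; auto. Qed.
Lemma ExF2 nu y : -1 < nu -> ex_derive (fun x => F2 nu x) y.
Proof. intros; eexists; apply DF2; auto. Qed.

Definition Uy nu y := 12 * F1 nu y ^ 2 - 8 * y * F1 nu y ^ 2
  + 32 * (nu+2) * y * F1 nu y * F2 nu y + 48 * y^2 * F2 nu y ^ 2.

Definition Phi nu z := exp ((nu+1) * ln z) * (2 * F1 nu z) * Uy nu z.

Definition dPhi nu z :=
  let A := F1 nu z in let B := F2 nu z in let C := F3 nu z in
  exp ((nu+1) * ln z) * ((nu+1) / z * (2*A) * Uy nu z + 2*B * Uy nu z
   + 2*A * (24*A*B - 8*A^2 - 16*z*A*B + 32*(nu+2)*(A*B + z*B^2 + z*A*C)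
            + 96*z*B^2 + 96*z^2*B*C)).

Lemma Phi_der nu z : -1 < nu -> 0 < z -> is_derive (Phi nu) z (dPhi nu z).
Proof.
  intros H Hz. unfold Phi, Uy. auto_derive.
  - split; [lra|]. split. apply ExF1; lra. split. apply ExF1; lra. split. apply ExF1; lra. split. apply ExF1; lra. split. apply ExF2; lra. split. apply ExF2; lra. exact I.
  - rewrite DeF1, DeF2 by auto. unfold dPhi, Uy. cbv zeta.
    set (E := exp _). set (A := F1 nu z). set (B := F2 nu z). set (C := F3 nu z).
    clearbody E A B C. unfold Rdiv. ring.
Qed.

Lemma dPhi_ge0 nu z : -1 < nu -> 0 < z -> 0 <= dPhi nu z.
Proof.
  intros H Hz. pose proof (E2 nu z H) as HE.
  pose proof (F1_pos nu z H (Rlt_le _ _ Hz)) as HA.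
  pose proof (F2_ge0 nu z H (Rlt_le _ _ Hz)) as HB.
  unfold dPhi, Uy. cbv zeta.
  set (E := exp _). set (A := F1 nu z) in *. set (B := F2 nu z) in *. set (C := F3 nu z) in *.
  assert (HEp : 0 < E) by apply exp_pos.
  clearbody E A B C.
  assert (HC' : z * C = A/4 - (nu+2)*B) by lra.
  assert (HC : C = (A/4 - (nu+2)*B)/z) by (rewrite <- HC'; field; lra).
  match goal with |- 0 <= E * ?Q => assert (HQ : Q =
    (12*(2*z*B)^3 + (16+4*(nu+1))*(2*z*B)^2*(2*A) + 9*(2*z*B)*(2*A)^2 + 3*(nu+1)*(2*A)^3) / z) end.
  { rewrite HC. field. lra. }
  rewrite HQ. apply Rmult_le_pos; [lra|]. apply Rdiv_le_0_compat; [|lra].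
  assert (0 <= z*B) by nra.
  assert (0 < nu+1) by lra.
  repeat apply Rplus_le_le_0_compat; repeat apply Rmult_le_pos; try apply pow_le; nra.
Qed.

Lemma Uy_pos_small nu y : -1 < nu -> 0 <= y -> y <= 1 -> 0 < Uy nu y.
Proof.
  intros H Hy Hy1. pose proof (F1_pos nu y H Hy). pose proof (F2_ge0 nu y H Hy).
  unfold Uy. set (A := F1 nu y) in *. set (B := F2 nu y) in *.
  assert (0 <= 32 * (nu + 2) * y * A * B).
  { repeat apply Rmult_le_pos; lra. }
  assert (0 <= 48 * y^2 * B^2) by (apply Rmult_le_pos; [apply Rmult_le_pos; [lra|apply pow_le; lra]|apply pow_le; lra]).
  assert (0 < A^2) by (apply pow_lt; lra).
  nra.
Qed.

Lemma Uy_pos nu y : -1 < nu -> 0 <= y -> 0 < Uy nu y.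
Proof.
  intros H Hy. destruct (Rle_lt_dec y 1) as [Hy1|Hy1]. now apply Uy_pos_small.
  destruct (MVT_cor2 (Phi nu) (dPhi nu) 1 y Hy1) as [c [Hc1 Hc2]].
  { intros c Hc. apply is_derive_Reals, Phi_der; lra. }
  assert (0 <= dPhi nu c) by (apply dPhi_ge0; lra).
  assert (HP1 : 0 < Phi nu 1).
  { unfold Phi. rewrite ln_1, Rmult_0_r, exp_0.
    pose proof (F1_pos nu 1 H ltac:(lra)). pose proof (Uy_pos_small nu 1 H ltac:(lra) ltac:(lra)).
    apply Rmult_lt_0_compat; lra. }
  assert (HPy : 0 < Phi nu y) by nra.
  unfold Phi in HPy. pose proof (exp_pos ((nu + 1) * ln y)). pose proof (F1_pos nu y H Hy).
  destruct (Rle_lt_dec (Uy nu y) 0) as [Hu|Hu]; [|exact Hu].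
  exfalso. assert (0 < exp ((nu + 1) * ln y) * (2 * F1 nu y)) by (apply Rmult_lt_0_compat; lra).
  nra.
Qed.
Lemma incr_from_der (h dh : R -> R) a b :
  a <= b ->
  (forall t, a <= t <= b -> is_derive h t (dh t)) ->
  (forall t, a <= t <= b -> 0 <= dh t) -> h a <= h b.
Proof.
  intros Hab Hd Hp. destruct (Req_dec a b) as [->|Hne]; [lra|].
  destruct (MVT_cor2 h dh a b ltac:(lra)) as [c [Hc1 Hc2]].
  { intros c Hc; apply is_derive_Reals, Hd; lra. }
  assert (0 <= dh c) by (apply Hp; lra). nra.
Qed.

Lemma final_abstract (f g G1 G2 : R -> R) a b :
  0 < a < b ->
  (forall t, a <= t <= b -> is_derive f t (g t)) ->
  (forall t, a <= t <= b -> is_derive g t (G1 t)) ->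
  (forall t, a <= t <= b -> is_derive G1 t (G2 t)) ->
  (forall t, a <= t <= b -> 0 < g t) ->
  (forall t, a <= t <= b -> 0 <= 3 * G1 t ^ 2 - 2 * g t * G2 t) ->
  (b - a) * sqrt (g a) * sqrt (g b) <= f b - f a.
Proof.
  intros Hab Hf Hg HG1 Hgp HU.
  assert (Hmono : forall t, a <= t <= b -> 0 <= f t - f a).
  { intros t Ht. assert (f a <= f t); [|lra].
    apply (incr_from_der f g a t); try lra.
    intros s Hs; apply Hf; lra. intros s Hs; apply Rlt_le, Hgp; lra. }
  set (Psi1 := fun t => sqrt (g t) + (f t - f a) * (- G1 t / (2 * g t * sqrt (g t))) - sqrt (g a)).
  set (dPsi1 := fun t => (f t - f a) * ((3 * G1 t ^ 2 - 2 * g t * G2 t) / (4 * g t ^ 2 * sqrt (g t)))).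
  assert (HdPsi1 : forall t, a <= t <= b -> is_derive Psi1 t (dPsi1 t)).
  { intros t Ht. unfold Psi1, dPsi1.
    pose proof (Hgp t Ht) as Hg0.
    assert (Hs : 0 < sqrt (g t)) by (apply sqrt_lt_R0; lra).
    auto_derive.
    - assert (2 * g t * sqrt (g t) <> 0) by (apply Rgt_not_eq; apply Rmult_lt_0_compat; lra).
      repeat match goal with
      | |- _ /\ _ => split
      | |- ex_derive (fun x => g x) t => eexists; apply Hg; lra
      | |- ex_derive (fun x => f x) t => eexists; apply Hf; lra
      | |- ex_derive (fun x => G1 x) t => eexists; apply HG1; lra
      | |- True => exact I
      | |- _ => assumption
      end.
    - replace (Derive (fun x => g x) t) with (G1 t) by (symmetry; apply is_derive_unique; apply Hg; lra).
      replace (Derive (fun x => f x) t) with (g t) by (symmetry; apply is_derive_unique; apply Hf; lra).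
      replace (Derive (fun x => G1 x) t) with (G2 t) by (symmetry; apply is_derive_unique; apply HG1; lra).
      assert (HS : g t = sqrt (g t) * sqrt (g t)) by (rewrite sqrt_sqrt; lra).
      set (S := sqrt (g t)) in *. clearbody S. rewrite HS. field. lra. }
  assert (HPsi1 : forall t, a <= t <= b -> 0 <= Psi1 t).
  { intros t Ht. assert (Psi1 a = 0) as H0.
    { unfold Psi1. ring. }
    rewrite <- H0. apply (incr_from_der Psi1 dPsi1 a t); try lra.
    intros s Hs; apply HdPsi1; lra.
    intros s Hs. unfold dPsi1. apply Rmult_le_pos. apply Hmono; lra.
    apply Rdiv_le_0_compat. apply HU; lra.
    pose proof (Hgp s ltac:(lra)). assert (0 < sqrt (g s)) by (apply sqrt_lt_R0; lra).
    apply Rmult_lt_0_compat; [|lra]. apply Rmult_lt_0_compat; [lra|]. apply pow_lt; lra. }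
  set (Psi := fun t => (f t - f a) / sqrt (g t) - (t - a) * sqrt (g a)).
  assert (HdPsi : forall t, a <= t <= b -> is_derive Psi t (Psi1 t)).
  { intros t Ht. unfold Psi, Psi1.
    pose proof (Hgp t Ht) as Hg0.
    assert (Hs : 0 < sqrt (g t)) by (apply sqrt_lt_R0; lra).
    auto_derive.
    - assert (sqrt (g t) <> 0) by lra.
      repeat match goal with
      | |- _ /\ _ => split
      | |- ex_derive (fun x => g x) t => eexists; apply Hg; lra
      | |- ex_derive (fun x => f x) t => eexists; apply Hf; lra
      | |- ex_derive (fun x => G1 x) t => eexists; apply HG1; lra
      | |- True => exact I
      | |- _ => assumption
      end.
    - replace (Derive (fun x => g x) t) with (G1 t) by (symmetry; apply is_derive_unique; apply Hg; lra).
      replace (Derive (fun x => f x) t) with (g t) by (symmetry; apply is_derive_unique; apply Hf; lra).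
      assert (HS : g t = sqrt (g t) * sqrt (g t)) by (rewrite sqrt_sqrt; lra).
      set (S := sqrt (g t)) in *. clearbody S. rewrite HS. field. lra. }
  assert (Psi a <= Psi b).
  { apply (incr_from_der Psi Psi1 a b); try lra.
    intros s Hs; apply HdPsi; lra. intros s Hs; apply HPsi1; lra. }
  assert (Psi a = 0) as H0 by (unfold Psi; unfold Rdiv; ring).
  unfold Psi in *. pose proof (Hgp b ltac:(lra)).
  assert (Hsb : 0 < sqrt (g b)) by (apply sqrt_lt_R0; lra).
  assert (Hq : (b - a) * sqrt (g a) <= (f b - f a) / sqrt (g b)) by lra.
  apply (Rmult_le_compat_r (sqrt (g b))) in Hq; [|lra].
  replace ((f b - f a) / sqrt (g b) * sqrt (g b)) with (f b - f a) in Hq by (field; lra).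
  exact Hq.
Qed.
Lemma Inu_eq nu x : -1 < nu -> Inu nu x = F0 nu (x^2).
Proof.
  intros H.
  assert (Hc : Un_cv (Ipartial nu x) (F0 nu (x^2))).
  { pose proof (PSeries_correct (Icoef nu) (x^2) (Inf_ex _ _ (Inf0 nu H))) as Hp.
    unfold is_pseries in Hp. apply is_series_Reals in Hp.
    apply is_lim_seq_Reals.
    apply is_lim_seq_ext with (fun N => sum_f_R0 (fun k => scal (pow_n (x^2) k) (Icoef nu k)) N).
    - intros N. unfold Ipartial. apply sum_eq. intros k _.
      rewrite pow_n_pow, <- pow_mult. change (scal ?u ?v) with (u * v). ring.
    - apply is_lim_seq_Reals. exact Hp. }
  unfold Inu. apply (UL_sequence (Ipartial nu x)); [|exact Hc].
  apply (epsilon_spec (inhabits 0) (fun l => Un_cv (Ipartial nu x) l)).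
  exists (F0 nu (x^2)); exact Hc.
Qed.

Definition fx nu x := F0 nu (x^2).
Definition gx nu x := 2 * x * F1 nu (x^2).
Definition G1x nu x := 2 * F1 nu (x^2) + 4 * x^2 * F2 nu (x^2).
Definition G2x nu x := 12 * x * F2 nu (x^2) + 8 * x^3 * F3 nu (x^2).

Ltac side nu H :=
  repeat match goal with
  | |- _ /\ _ => split
  | |- ex_derive (fun x => F0 nu x) _ => apply ExF0; exact H
  | |- ex_derive (fun x => F1 nu x) _ => apply ExF1; exact H
  | |- ex_derive (fun x => F2 nu x) _ => apply ExF2; exact H
  | |- True => exact I
  end.

Lemma Dfx nu x : -1 < nu -> is_derive (fx nu) x (gx nu x).
Proof.
  intros H. unfold fx, gx. auto_derive. side nu H.
  rewrite DeF0 by auto. simpl. ring.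
Qed.
Lemma Dgx nu x : -1 < nu -> is_derive (gx nu) x (G1x nu x).
Proof.
  intros H. unfold gx, G1x. auto_derive. side nu H.
  rewrite DeF1 by auto. simpl. ring.
Qed.
Lemma DG1x nu x : -1 < nu -> is_derive (G1x nu) x (G2x nu x).
Proof.
  intros H. unfold G1x, G2x. auto_derive. side nu H.
  rewrite DeF1, DeF2 by auto. simpl. ring.
Qed.

Lemma U_x nu x : -1 < nu -> 0 < 3 * G1x nu x ^ 2 - 2 * gx nu x * G2x nu x.
Proof.
  intros H. assert (Hy : 0 <= x^2) by (apply pow2_ge_0).
  pose proof (Uy_pos nu (x^2) H Hy) as HU.
  pose proof (E2 nu (x^2) H) as HE.
  unfold Uy in HU. unfold G1x, gx, G2x.
  set (A := F1 nu (x^2)) in *. set (B := F2 nu (x^2)) in *. set (C := F3 nu (x^2)) in *.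
  clearbody A B C.
  assert (HC : x^2 * C = A/4 - (nu+2)*B) by lra.
  replace (3 * (2 * A + 4 * x ^ 2 * B) ^ 2 - 2 * (2 * x * A) * (12 * x * B + 8 * x ^ 3 * C))
    with (12 * A^2 + 48 * (x^2)^2 * B^2 - 32 * (x^2) * A * (x^2 * C)) by ring.
  rewrite HC. nra.
Qed.

Lemma gx_pos nu x : -1 < nu -> 0 < x -> 0 < gx nu x.
Proof.
  intros H Hx. unfold gx. pose proof (F1_pos nu (x^2) H (pow2_ge_0 x)).
  apply Rmult_lt_0_compat; lra.
Qed.

Lemma main_lt nu a b : -1 < nu -> 0 < a < b ->
  (b - a) * sqrt (gx nu a) * sqrt (gx nu b) <= fx nu b - fx nu a.
Proof.
  intros H Hab. apply (final_abstract (fx nu) (gx nu) (G1x nu) (G2x nu)); auto.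
  - intros t _; apply Dfx; auto.
  - intros t _; apply Dgx; auto.
  - intros t _; apply DG1x; auto.
  - intros t Ht; apply gx_pos; lra.
  - intros t _; apply Rlt_le, U_x; auto.
Qed.

Lemma main_sym nu a b : -1 < nu -> 0 < a -> 0 < b ->
  Rabs (fx nu a - fx nu b) >= Rabs (a - b) * sqrt (gx nu a * gx nu b).
Proof.
  intros H Ha Hb.
  pose proof (gx_pos nu a H Ha). pose proof (gx_pos nu b H Hb).
  rewrite sqrt_mult by lra.
  destruct (Rtotal_order a b) as [Hlt|[Heq|Hgt]].
  - pose proof (main_lt nu a b H ltac:(lra)).
    assert (0 <= (b - a) * sqrt (gx nu a) * sqrt (gx nu b)).
    { apply Rmult_le_pos; [apply Rmult_le_pos; [lra|apply sqrt_pos]|apply sqrt_pos]. }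
    rewrite Rabs_left1 by lra. rewrite Rabs_left1 by lra. lra.
  - subst. replace (fx nu b - fx nu b) with 0 by ring. replace (b - b) with 0 by ring. rewrite Rabs_R0. lra.
  - pose proof (main_lt nu b a H ltac:(lra)).
    assert (0 <= (a - b) * sqrt (gx nu b) * sqrt (gx nu a)).
    { apply Rmult_le_pos; [apply Rmult_le_pos; [lra|apply sqrt_pos]|apply sqrt_pos]. }
    rewrite Rabs_right by lra. rewrite Rabs_right by lra. lra.
Qed.

Theorem corollary1 :
  forall (nu a b da db : R),
    -1 < nu ->
    derivable_pt_lim (Inu nu) a da ->
    derivable_pt_lim (Inu nu) b db ->
    ((nu <= -1/2 /\ 0 <= a /\ 0 <= b) \/
     (0 < a < sqrt (2 * (nu + 3)) /\ 0 < b < sqrt (2 * (nu + 3)))) ->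
    Rabs (Inu nu a - Inu nu b) >= Rabs (a - b) * sqrt (da * db).
Proof.
  intros nu a b da db H Hda Hdb Hcase.
  assert (Hf : Inu nu = fx nu).
  { apply functional_extensionality; intros x. unfold fx; apply Inu_eq; auto. }
  rewrite Hf in *.
  assert (da = gx nu a) as -> by (apply (uniqueness_limite (fx nu) a); auto; apply is_derive_Reals, Dfx; auto).
  assert (db = gx nu b) as -> by (apply (uniqueness_limite (fx nu) b); auto; apply is_derive_Reals, Dfx; auto).
  assert (Hab : 0 <= a /\ 0 <= b) by lra.
  destruct (Req_dec a 0) as [->|Ha].
  { replace (gx nu 0) with 0 by (unfold gx; ring). rewrite Rmult_0_l, sqrt_0, Rmult_0_r. apply Rle_ge, Rabs_pos. }
  destruct (Req_dec b 0) as [->|Hb].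
  { replace (gx nu 0) with 0 by (unfold gx; ring). rewrite Rmult_0_r, sqrt_0, Rmult_0_r. apply Rle_ge, Rabs_pos. }
  apply main_sym; auto; lra.
Qed.
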